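(* Let $F\in\mathbb{R}^{n\times n}$, $G\in\mathbb{R}^{n\times m}$ and $H\in\mathbb{R}^{p\times n}$ with $m\le p$ and $m\le n$, such that $(F,G)$ is reachable, $(F,H)$ is observable, $F$ has all its eigenvalues in the open left half-plane, $G$ has full column rank $m$, and $\mathrm{rank}(HG)=m$. Let $V_{\zeta}(s)=H(sI-F)^{-1}G$. Let $\Pi$ be a $p\times p$ permutation matrix such that $\Pi H=\begin{pmatrix}H_0\\ H_1\end{pmatrix}$ with $H_0\in\mathbb{R}^{m\times n}$ and $H_0G$ invertible (such a $\Pi$ exists because $\mathrm{rank}(HG)=m$). Define $\Gamma=F-G(H_0G)^{-1}H_0F$, $$T(s)=H_1\Gamma(sI-\Gamma)^{-1}G(H_0G)^{-1}+H_1G(H_0G)^{-1},\qquad M(s)=H_0F(sI-F)^{-1}G+H_0G .$$ Then $$\Pi\, V_{\zeta}(s)=\begin{pmatrix} I\\ T(s)\end{pmatrix}M(s)\,s^{-1}.$$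
   Context: Here $V_\zeta$ is a minimal stable spectral factor of the spectral density $\Phi_\zeta(i\omega)=V_\zeta(i\omega)V_\zeta(-i\omega)'$ of a stationary $p$-vector process $\zeta$; reordering the rows of $H$ by $\Pi$ corresponds to reordering the entries of $\zeta$ so that the first $m$ entries form $u$ and the remaining $p-m$ form $y$, and $T$ is then the transfer function relating $u$ to $y$. *)

(* Defs.v *)
From HB Require Import structures.
From mathcomp Require Import all_boot all_order all_algebra all_fingroup.
From mathcomp Require Import complex.
Set Implicit Arguments. Unset Strict Implicit. Unset Printing Implicit Defensive.
Import Order.TTheory GRing.Theory Num.Theory.
Local Open Scope ring_scope.

Definition cmx (R : rcfType) (k l : nat) (A : 'M[R]_(k, l)) : 'M[R[i]]_(k, l) :=
  map_mx (fun x : R => (x%:C)%C) A.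

Definition reachable (R : fieldType) (n m : nat) (F : 'M[R]_n) (G : 'M[R]_(n, m)) :=
  \rank (\mxrow_(k < n) (F ^+ k *m G)) = n.

Definition observable (R : fieldType) (n p : nat) (F : 'M[R]_n) (H : 'M[R]_(p, n)) :=
  \rank (\mxcol_(k < n) (H *m F ^+ k)) = n.

Definition hurwitz (R : rcfType) (n : nat) (F : 'M[R]_n) :=
  forall lam : R[i], eigenvalue (cmx F) lam -> Re lam < 0.

(* Main.v *)
Require Import Defs.
From HB Require Import structures.
From mathcomp Require Import all_boot all_order all_algebra all_fingroup.
From mathcomp Require Import complex.
Import Order.TTheory GRing.Theory Num.Theory.
Local Open Scope ring_scope.

Lemma key (C : fieldType) n m q (f : 'M[C]_n) (g : 'M[C]_(n, m)) (h0 : 'M[C]_(m, n))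
  (h1 : 'M[C]_(q, n)) (s : C) :
  let K := invmx (h0 *m g) in
  let gam := f - g *m K *m h0 *m f in
  h0 *m g \in unitmx -> s != 0 -> s%:M - f \in unitmx -> s%:M - gam \in unitmx ->
  col_mx h0 h1 *m invmx (s%:M - f) *m g =
  s^-1 *: (col_mx 1%:M (h1 *m gam *m invmx (s%:M - gam) *m g *m K + h1 *m g *m K)
     *m (h0 *m f *m invmx (s%:M - f) *m g + h0 *m g)).
Proof.
move=> K gam uG sn0 uF uGam.
set Rf := invmx (s%:M - f); set Rg := invmx (s%:M - gam).
have fR : f *m Rf = s *: Rf - 1%:M.
  have := mulmxV uF; rewrite -/Rf mulmxBl mul_scalar_mx => <-.
  by rewrite opprB addrC subrK.
have gR : gam *m Rg = s *: Rg - 1%:M.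
  have := mulmxV uGam; rewrite -/Rg mulmxBl mul_scalar_mx => <-.
  by rewrite opprB addrC subrK.
have KG : K *m (h0 *m g) = 1%:M by apply: mulVmx.
have EM : h0 *m f *m Rf *m g + h0 *m g = s *: (h0 *m Rf *m g).
  rewrite -(mulmxA h0 f) fR mulmxBr mulmxBl mulmx1 -scalemxAr -scalemxAl.
  by rewrite subrK.
have ET : h1 *m gam *m Rg *m g *m K + h1 *m g *m K = s *: (h1 *m Rg *m g *m K).
  rewrite -(mulmxA h1 gam) gR mulmxBr mulmxBl mulmxBl mulmx1 -!scalemxAr -!scalemxAl.
  by rewrite subrK.
have Ekey : s *: (Rg *m g *m K *m h0 *m Rf *m g) = Rf *m g.
  have -> : Rf *m g = Rg *m ((s%:M - gam) *m (Rf *m g)).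
    by rewrite mulmxA mulVmx // mul1mx.
  have A : (s%:M - gam) *m (Rf *m g) = s *: (g *m K *m h0 *m Rf *m g).
    have -> : s%:M - gam = (s%:M - f) + g *m K *m h0 *m f.
      by rewrite /gam opprB addrCA addrC.
    rewrite mulmxDl mulmxA mulmxV // mul1mx.
    have -> : g *m K *m h0 *m f *m (Rf *m g) = g *m K *m h0 *m (f *m Rf) *m g.
      by rewrite !mulmxA.
    rewrite fR mulmxBr mulmxBl mulmx1.
    rewrite -(mulmxA (g *m K) h0 g) -(mulmxA g K (h0 *m g)) KG mulmx1.
    by rewrite -scalemxAr -scalemxAl addrC subrK.
  by rewrite A -scalemxAr !mulmxA.
rewrite EM ET !mul_col_mx mul1mx scale_col_mx.
congr col_mx; first by rewrite scalerA mulVf // scale1r.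
rewrite -scalemxAl -scalemxAr scalerA mulVf // scale1r.
rewrite -(mulmxA h1 Rf g) -Ekey -scalemxAr; congr (_ *: _).
by rewrite !mulmxA.
Qed.

Theorem theorem1 (R : rcfType) (n m q : nat)
  (F : 'M[R]_n) (G : 'M[R]_(n, m)) (H : 'M[R]_(m + q, n))
  (Pi : 'S_(m + q)) (s : R[i]) :
  (m <= n)%N ->
  reachable F G ->
  observable F H ->
  hurwitz F ->
  \rank G = m ->
  \rank (H *m G) = m ->
  let H0 := usubmx (perm_mx Pi *m H) in
  let H1 := dsubmx (perm_mx Pi *m H) in
  H0 *m G \in unitmx ->
  let Gam := F - G *m invmx (H0 *m G) *m H0 *m F in
  let V := cmx H *m invmx (s%:M - cmx F) *m cmx G in
  let T := cmx H1 *m cmx Gam *m invmx (s%:M - cmx Gam) *m cmx G *m cmx (invmx (H0 *m G))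
           + cmx H1 *m cmx G *m cmx (invmx (H0 *m G)) in
  let M := cmx H0 *m cmx F *m invmx (s%:M - cmx F) *m cmx G + cmx H0 *m cmx G in
  s != 0 ->
  s%:M - cmx F \in unitmx ->
  s%:M - cmx Gam \in unitmx ->
  perm_mx Pi *m V = s^-1 *: (col_mx 1%:M T *m M).
Proof.
move=> _ _ _ _ _ _ H0 H1 uH0G Gam V T M sn0 uF uGam.
have cM k l p (A : 'M[R]_(k, l)) (B : 'M[R]_(l, p)) : cmx (A *m B) = cmx A *m cmx B.
  exact: map_mxM.
have cB k l (A B : 'M[R]_(k, l)) : cmx (A - B) = cmx A - cmx B.
  exact: map_mxB.
have cI : cmx (invmx (H0 *m G)) = invmx (cmx H0 *m cmx G).
  by rewrite /cmx map_invmx map_mxM.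
have cG : cmx Gam = cmx F - cmx G *m invmx (cmx H0 *m cmx G) *m cmx H0 *m cmx F.
  by rewrite /Gam cB !cM cI.
have cP : perm_mx Pi *m cmx H = col_mx (cmx H0) (cmx H1).
  by rewrite -(map_perm_mx (real_complex R)) -map_mxM -map_col_mx vsubmxK.
have u : cmx H0 *m cmx G \in unitmx by rewrite -cM /cmx map_unitmx.
rewrite /V [LHS]mulmxA [in LHS]mulmxA cP.
move: uGam; rewrite cG => uGam.
have := @key _ _ _ _ (cmx F) (cmx G) (cmx H0) (cmx H1) s u sn0 uF uGam.
rewrite /T /M cI => E. rewrite -cG in E. Time exact E.
Qed.
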